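(* Suppose $\beta_j\ne0$ for $j=2,3,\dots,k$ in the Lanczos process. Then the optimal value $\mu^{(k)}$ of rLGopt satisfies $\mu^{(k)}<\lambda_{\min}(T_k)$, and rLGopt cannot fall into the hard case.
   Context: Let $M\in\mathbb{R}^{n\times n}$ be symmetric (in the paper $M=PAP$) and $0\ne b_0\in\mathbb{R}^n$, $\gamma>0$. Lanczos process: $q_0=0$, $\beta_1=\|b_0\|$, $q_1=b_0/\|b_0\|$, for $j=1,2,\dots$: $\alpha_j=q_j^{\top}Mq_j$, $\widehat q_{j+1}=Mq_j-\alpha_jq_j-\beta_jq_{j-1}$, $\beta_{j+1}=\|\widehat q_{j+1}\|$, $q_{j+1}=\widehat q_{j+1}/\beta_{j+1}$ when $\beta_{j+1}>0$. $T_k$ is the $k\times k$ symmetric tridiagonal matrix with diagonal $\alpha_1,\dots,\alpha_k$ and off-diagonal entries $\beta_2,\dots,\beta_k$. rLGopt: minimize $\lambda$ over $(\lambda,x)\in\mathbb{R}\times\mathbb{R}^k$ with $(T_k-\lambda I)x=-\|b_0\|e_1$ and $\|x\|=\gamma$; $\mu^{(k)}$ is its optimal value. The associated rQEPmin: minimize $\lambda$ over $\lambda\in\mathbb{R}$, $0\ne w\in\mathbb{R}^k$ with $(T_k-\lambda I)^2w=\gamma^{-2}\|b_0\|^2e_1e_1^{\top}w$. rLGopt is said to be in the hard case if rQEPmin has a minimizer $(\lambda,w)$ with $e_1^{\top}w=0$. *)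

(* Defs.v *)
From HB Require Import structures.
From mathcomp Require Import all_boot all_order all_algebra.
From mathcomp Require Import boolp classical_sets reals.
Set Implicit Arguments. Unset Strict Implicit. Unset Printing Implicit Defensive.
Import Order.TTheory GRing.Theory Num.Theory.
Local Open Scope ring_scope.
Local Open Scope classical_set_scope.

Section Lanczos.
Variable R : realType.

Definition vnorm (m : nat) (v : 'cV[R]_m) : R :=
  Num.sqrt (\sum_(i < m) v i 0 ^+ 2).

Definition e1 (k : nat) : 'cV[R]_k := \col_(i < k) ((i == 0 :> nat)%:R).

Variables (n : nat) (M : 'M[R]_n) (b0 : 'cV[R]_n).

(* lanczos_state m = (q_{m}, q_{m+1}, beta_{m+1}), with q_0 = 0,
   q_1 = b0/||b0||, beta_1 = ||b0||.  When beta_{j+1} = 0 the vector q_{j+1}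
   is set to 0 (0^-1 = 0 in MathComp); it is never used under the theorem's
   hypotheses. *)
Fixpoint lanczos_state (m : nat) : 'cV[R]_n * 'cV[R]_n * R :=
  match m with
  | 0 => (0, (vnorm b0)^-1 *: b0, vnorm b0)
  | m'.+1 =>
      let: (qp, q, b) := lanczos_state m' in
      let a := (q^T *m M *m q) 0 0 in
      let qh := M *m q - a *: q - b *: qp in
      let b' := vnorm qh in
      (q, b'^-1 *: qh, b')
  end.

Definition lanczos_q (j : nat) : 'cV[R]_n := (lanczos_state j.-1).1.2.
Definition lanczos_beta (j : nat) : R := (lanczos_state j.-1).2.
Definition lanczos_alpha (j : nat) : R :=
  ((lanczos_q j)^T *m M *m lanczos_q j) 0 0.

(* T_k : k x k symmetric tridiagonal, diagonal alpha_1..alpha_k,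
   off-diagonal beta_2..beta_k (0-based entry (i,i+1) is beta_{i+2}). *)
Definition lanczos_T (k : nat) : 'M[R]_k :=
  \matrix_(i < k, j < k)
    (if i == j :> nat then lanczos_alpha i.+1
     else if j == i.+1 :> nat then lanczos_beta j.+1
     else if i == j.+1 :> nat then lanczos_beta i.+1
     else 0).

End Lanczos.

Section Problems.
Variable R : realType.
Variables (k : nat) (T : 'M[R]_k) (nb gamma : R).
(* nb plays the role of ||b_0|| *)

Definition rLG_feasible (l : R) (x : 'cV[R]_k) : Prop :=
  (T - l%:M) *m x = - (nb *: e1 R k) /\ vnorm x = gamma.

Definition rLG_opt : R := inf [set l : R | exists x, rLG_feasible l x].

Definition rQEP_feasible (l : R) (w : 'cV[R]_k) : Prop :=
  w != 0 /\
  (T - l%:M) *m (T - l%:M) *m w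
    = (gamma ^- 2 * nb ^+ 2) *: (e1 R k *m (e1 R k)^T *m w).

Definition rQEP_minimizer (l : R) (w : 'cV[R]_k) : Prop :=
  rQEP_feasible l w /\ forall l' w', rQEP_feasible l' w' -> l <= l'.

Definition rLG_hard_case : Prop :=
  exists l w, rQEP_minimizer l w /\ ((e1 R k)^T *m w) 0 0 = 0.

End Problems.

Definition lambda_min (R : realType) (k : nat) (T : 'M[R]_k) : R :=
  inf [set a : R | eigenvalue T a].

(* Main.v *)
Require Import Defs.
From HB Require Import structures.
From mathcomp Require Import all_boot all_order all_algebra.
From mathcomp Require Import boolp classical_sets reals.
From mathcomp Require Import polyrcf complex.
From mathcomp Require Import ring lra zify.
Import Order.TTheory GRing.Theory Num.Theory.
Local Open Scope ring_scope.
Lemma sym_eigen_exists (R : realType) (k : nat) (T : 'M[R]_k.+1) :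
  T^T = T -> exists th, eigenvalue T th.
Proof.
move=> HTs.
set f := real_complex R.
set Tc := map_mx f T.
have [a /eigenvalueP [v Hv vn0]] := @eigenvalue_closed (R[i]) _ Tc (ltn0Sn k).
set vc := map_mx Num.Def.conjC v.
have TcT : Tc^T = Tc by rewrite /Tc map_trmx HTs.
have Tcc : map_mx Num.Def.conjC Tc = Tc.
  by apply/matrixP => i j; rewrite !mxE /f /=; exact: conjc_real.
have vcc : map_mx Num.Def.conjC vc = v.
  by apply/matrixP => i j; rewrite !mxE conjCK.
pose N := (v *m vc^T) 0 0.
pose z := (v *m Tc *m vc^T) 0 0.
have zN : z = a * N by rewrite /z Hv -scalemxAl mxE.
have selfc (A : 'M[R[i]]_k.+1) : map_mx Num.Def.conjC A = A -> A^T = A ->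
    Num.Def.conjC ((v *m A *m vc^T) 0 0) = (v *m A *m vc^T) 0 0.
  move=> Ac At.
  have qE (B : 'M[R[i]]_k.+1) (x y : 'rV[R[i]]_k.+1) :
    (x *m B *m y^T) 0 0 = \sum_j \sum_i0 x 0 i0 * B i0 j * y 0 j.
    rewrite mxE; apply: eq_bigr => j _; rewrite mxE mulr_suml.
    by apply: eq_bigr => i0 _; rewrite !mxE.
  rewrite !qE rmorph_sum /= exchange_big /=; apply: eq_bigr => j _.
  rewrite rmorph_sum /=; apply: eq_bigr => i0 _.
  have Aij : Num.Def.conjC (A i0 j) = A j i0.
    by rewrite -[in RHS]At mxE -[in RHS]Ac mxE.
  by rewrite !rmorphM /= Aij /vc !mxE conjCK mulrC mulrA -!mulrA [A j i0 * _]mulrC.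
have zr : Num.Def.conjC z = z by apply: selfc.
have Nr : Num.Def.conjC N = N.
  have := selfc 1%:M; rewrite !mulmx1; apply.
    by apply/matrixP => i j; rewrite !mxE rmorphMn /= conjC1.
  by rewrite tr_scalar_mx.
have N0 : N != 0.
  apply: contra vn0 => /eqP N0; apply/eqP/matrixP => i j; rewrite ord1 mxE.
  have Hp : forall t : 'I_k.+1, predT t -> 0 <= v 0 t * vc^T t 0.
    by move=> t _; rewrite !mxE mul_conjC_ge0.
  have := @psumr_eq0P _ _ predT (fun t => v 0 t * vc^T t 0) Hp.
  move: N0; rewrite /N mxE => N0 /(_ N0 j isT) /eqP.
  by rewrite !mxE mul_conjC_eq0 => /eqP.
have ar : Num.Def.conjC a = a.
  apply: (mulIf N0); rewrite -zN -[in LHS]Nr -rmorphM /= -zN.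
  exact: zr.
have : a \is Num.real by rewrite CrealE ar.
move=> /complex_realP [r ar'].
exists r; rewrite eigenvalue_root_char.
rewrite -(fmorph_root f) map_char_poly -/Tc.
have E : eigenvalue Tc a by apply/eigenvalueP; exists v.
by rewrite eigenvalue_root_char ar' in E.
Qed.
Section Tri.
Variables (R : realType) (k : nat) (T : 'M[R]_k.+1).
Hypothesis HTs : T^T = T.
Hypothesis Htri : forall i j : 'I_k.+1, (i.+1 < j)%N -> T i j = 0.
Hypothesis Hsup : forall i j : 'I_k.+1, j = i.+1 :> nat -> T i j != 0.

Lemma Htri' (i j : 'I_k.+1) : (j.+1 < i)%N -> T i j = 0.
Proof. by move=> h; rewrite -[T]HTs mxE Htri. Qed.

Lemma kernel_top (l : R) (v : 'cV[R]_k.+1) :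
  (T - l%:M) *m v = 0 -> v ord0 0 = 0 -> v = 0.
Proof.
move=> Hv H0.
suff H : forall m (i : 'I_k.+1), (i <= m)%N -> v i 0 = 0.
  by apply/matrixP => i j; rewrite ord1 mxE (H i i).
elim=> [|m IH] i Hi.
  by have -> : i = ord0 by apply/val_inj => /=; move: Hi; case: (nat_of_ord i).
case: (ltnP i m.+1) => [lt|ge]; first by apply: IH; rewrite -ltnS.
have ei : nat_of_ord i = m.+1 by apply/eqP; rewrite eqn_leq Hi ge.
have mk : (m < k.+1)%N by rewrite (leq_trans _ (ltn_ord i)) // ei.
set j : 'I_k.+1 := Ordinal mk.
have /matrixP /(_ j 0) := Hv; rewrite !mxE (bigD1 i) //= big1.
  rewrite addr0 !mxE => /eqP; rewrite mulf_eq0 => /orP [|/eqP //].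
  have ne : (j == i) = false by apply/negbTE; rewrite -val_eqE /= ei ltn_eqF.
  by rewrite ne mulr0n subr0 (negbTE (@Hsup j i ei)).
move=> t tni; rewrite !mxE.
case: (leqP t m) => [tm|mt]; first by rewrite IH // mulr0.
have tm2 : (j.+1 < t)%N.
  have : nat_of_ord t != nat_of_ord i by apply: contra tni => /eqP e; apply/eqP/val_inj.
  rewrite /= ei; lia.
have ne : (j == t) = false by apply/negbTE; rewrite -val_eqE /=; move: tm2 => /=; lia.
by rewrite Htri // ne mulr0n subr0 mul0r.
Qed.

Lemma e1_dot (v : 'cV[R]_k.+1) : ((e1 R k.+1)^T *m v) 0 0 = v ord0 0.
Proof.
rewrite !mxE big_ord_recl big1 ?addr0 /e1.
  by rewrite !mxE /= mul1r.
by move=> i _; rewrite !mxE /= mul0r.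
Qed.

Lemma sym_sq (A : 'M[R]_k.+1) (w : 'cV[R]_k.+1) :
  A^T = A -> A *m A *m w = 0 -> A *m w = 0.
Proof.
move=> As H; set u := A *m w.
have H2 : u^T *m u = 0.
  by rewrite /u trmx_mul As -mulmxA (mulmxA A A w) H mulmx0.
have /matrixP /(_ 0 0) := H2; rewrite !mxE => Hs.
apply/matrixP => i j; rewrite ord1 [RHS]mxE.
have Hp : forall t : 'I_k.+1, predT t -> 0 <= u^T 0 t * u t 0.
  by move=> t _; rewrite mxE -expr2 sqr_ge0.
have := @psumr_eq0P _ _ predT (fun i => u^T 0 i * u i 0) Hp Hs i isT.
by rewrite mxE => /eqP; rewrite mulf_eq0 orbb => /eqP.
Qed.

Lemma not_hard (nb g : R) : ~ rLG_hard_case T nb g.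
Proof.
move=> [l [w [[[wn0 Heq] _] H0]]].
have E0 : (e1 R k.+1)^T *m w = 0 by apply/matrixP => i j; rewrite !ord1 H0 mxE.
rewrite -(mulmxA (e1 R k.+1)) E0 mulmx0 scaler0 in Heq.
have Ts : (T - l%:M)^T = T - l%:M by rewrite linearB /= HTs tr_scalar_mx.
have := sym_sq _ _ Ts Heq => /kernel_top.
rewrite -e1_dot H0 => /(_ erefl) wz.
by rewrite wz eqxx in wn0.
Qed.

Definition ss (v : 'cV[R]_k.+1) := \sum_i v i 0 ^+ 2.
Definition KT := \sum_j \sum_i `|T i j|.

Lemma ss_ge0 (v : 'cV[R]_k.+1) : 0 <= ss v.
Proof. by apply: sumr_ge0 => i _; rewrite sqr_ge0. Qed.

Lemma ss_le (v : 'cV[R]_k.+1) i : v i 0 ^+ 2 <= ss v.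
Proof. by rewrite /ss (bigD1 i) //= lerDl; apply: sumr_ge0 => t _; rewrite sqr_ge0. Qed.

Lemma ss_eq0 (v : 'cV[R]_k.+1) : ss v = 0 -> v = 0.
Proof.
move=> H; apply/matrixP => i j; rewrite ord1 [RHS]mxE.
have Hp : forall t : 'I_k.+1, predT t -> 0 <= v t 0 ^+ 2 by move=> t _; rewrite sqr_ge0.
have := @psumr_eq0P _ _ predT (fun i => v i 0 ^+ 2) Hp H i isT.
by move/eqP; rewrite sqrf_eq0 => /eqP.
Qed.

Lemma KT_ge0 : 0 <= KT.
Proof. by apply: sumr_ge0 => j _; apply: sumr_ge0 => i _. Qed.

Lemma dotE (v : 'cV[R]_k.+1) : (v^T *m v) 0 0 = ss v.
Proof. by rewrite mxE; apply: eq_bigr => i _; rewrite mxE expr2. Qed.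

Lemma qfE (v : 'cV[R]_k.+1) :
  (v^T *m T *m v) 0 0 = \sum_j \sum_i v i 0 * T i j * v j 0.
Proof.
rewrite mxE; apply: eq_bigr => j _; rewrite mxE mulr_suml.
by apply: eq_bigr => i _; rewrite mxE.
Qed.

Lemma QF (v : 'cV[R]_k.+1) : `|(v^T *m T *m v) 0 0| <= KT * ss v.
Proof.
rewrite qfE /KT mulr_suml (le_trans (ler_norm_sum _ _ _)) //.
apply: ler_sum => j _; rewrite mulr_suml (le_trans (ler_norm_sum _ _ _)) //.
apply: ler_sum => i _.
have hi := ss_le v i; have hj := ss_le v j.
rewrite !normrM -mulrA [`|v i 0| * _]mulrC -mulrA ler_wpM2l //.
have : `|v i 0| * `|v j 0| <= ss v.
  rewrite -(real_normK (num_real (v i 0))) in hi.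
  rewrite -(real_normK (num_real (v j 0))) in hj.
  have := normr_ge0 (v i 0); have := normr_ge0 (v j 0); nra.
by rewrite mulrC.
Qed.

Lemma sol_rel (l nb : R) (x : 'cV[R]_k.+1) :
  (T - l%:M) *m x = - (nb *: e1 R k.+1) ->
  (x^T *m T *m x) 0 0 - l * ss x = - nb * x ord0 0.
Proof.
move=> H.
have := congr1 (fun M => (x^T *m M) 0 0) H => /=.
rewrite mulmxBl mulmxBr mulmxA mul_scalar_mx.
have -> : (x^T *m T *m x - x^T *m (l *: x)) 0 0 = (x^T *m T *m x) 0 0 - l * ss x.
  rewrite -scalemxAr -dotE.
  by rewrite !mxE.
move=> ->; rewrite mulmxN -scalemxAr mxE [X in - X]mxE mulNr; congr (- (_ * _)).
rewrite mxE big_ord_recl big1 ?addr0 /e1.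
  by rewrite !mxE /= mulr1.
by move=> i _; rewrite !mxE /= mulr0.
Qed.

Lemma eig_lb (th : R) : eigenvalue T th -> - KT <= th.
Proof.
move=> /eigenvalueP [v Hv vn0].
set c := v^T.
have Tc : T *m c = th *: c.
  by rewrite /c -{1}HTs -trmx_mul Hv linearZ.
have hq := QF c.
rewrite -mulmxA Tc -scalemxAr mxE dotE in hq.
have sp : 0 < ss c.
  rewrite lt_def ss_ge0 andbT; apply/eqP => /ss_eq0 c0.
  by move: vn0; rewrite -(trmxK v) -/c c0 trmx0 eqxx.
move: hq; rewrite ler_norml => /andP [h1 _].
by rewrite -(ler_pM2r sp) mulNr.
Qed.

Lemma ss_small (l nb g : R) (x : 'cV[R]_k.+1) : 0 < nb -> 0 < g ->
  (T - l%:M) *m x = - (nb *: e1 R k.+1) ->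
  l < - KT - nb - nb / g ^+ 2 -> ss x < g ^+ 2.
Proof.
move=> nbp gp /sol_rel H hl.
set q := (x^T *m T *m x) 0 0 in H.
set s := ss x in H *.
set a := x ord0 0 in H.
have hq : `|q| <= KT * s by exact: QF.
have ha : a ^+ 2 <= s by exact: ss_le.
have s0 : 0 <= s by exact: ss_ge0.
have K0 := KT_ge0.
set c := nb / g ^+ 2 in hl.
have g2 : 0 < g ^+ 2 by rewrite exprn_gt0.
have cg : c * g ^+ 2 = nb by rewrite /c mulfVK // gt_eqF.
have c0 : 0 < c by rewrite /c divr_gt0.
have habs : `|a| <= (1 + s) / 2.
  rewrite ler_pdivlMr //; have e := real_normK (num_real a).
  have := sqr_ge0 (`|a| - 1); nra.
have hq' : - (KT * s) <= q by rewrite lerNl (le_trans _ hq) // -normrN ler_norm.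
have hna : - `|a| <= a by rewrite lerNl -normrN ler_norm.
rewrite ltNge; apply/negP => sg.
have h1 : (- l - (KT + nb + c)) * s >= 0 by apply: mulr_ge0 => //; lra.
have h2 : c * s >= nb by rewrite -cg ler_wpM2l // ltW.
nra.
Qed.

Definition chM (l : R) := \det (l%:M - T).
Definition yv (l : R) := \adj (l%:M - T) *m e1 R k.+1.

Lemma sol_y (l : R) : (T - l%:M) *m yv l = - (chM l *: e1 R k.+1).
Proof.
by rewrite /yv -opprB mulNmx mulmxA mul_mx_adj mul_scalar_mx.
Qed.

Lemma eval_cpm (l : R) : map_mx (horner_eval l) (char_poly_mx T) = l%:M - T.
Proof.
apply/matrixP => i j; rewrite !mxE /horner_eval.
by rewrite hornerD hornerN hornerC hornerMn hornerX.
Qed.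

Lemma chM_char (l : R) : (char_poly T).[l] = chM l.
Proof.
by rewrite /chM -eval_cpm det_map_mx.
Qed.

Lemma eig_chM (l : R) : eigenvalue T l = (chM l == 0).
Proof. by rewrite eigenvalue_root_char /root chM_char. Qed.

Definition Pv := \adj (char_poly_mx T) *m map_mx polyC (e1 R k.+1).

Lemma eval_Pv (l : R) : map_mx (horner_eval l) Pv = yv l.
Proof.
rewrite /Pv map_mxM map_mx_adj eval_cpm /yv; congr (_ *m _).
by apply/matrixP => i j; rewrite !mxE; exact: hornerC.
Qed.

Definition Gp (nb g : R) : {poly R} :=
  nb ^+ 2 *: \sum_i (Pv i 0) ^+ 2 - g ^+ 2 *: (char_poly T) ^+ 2.

Lemma Gp_eval (nb g l : R) :
  (Gp nb g).[l] = nb ^+ 2 * ss (yv l) - g ^+ 2 * chM l ^+ 2.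
Proof.
rewrite /Gp hornerD hornerN !hornerZ horner_exp chM_char horner_sum /ss.
congr (_ * _ - _); apply: eq_bigr => i _.
rewrite horner_exp -eval_Pv; congr (_ ^+ 2).
by rewrite [in RHS]mxE.
Qed.

Lemma ymax (l : R) : yv l ord_max 0 != 0.
Proof.
rewrite /yv mxE big_ord_recl big1 ?addr0; last by move=> i _; rewrite !mxE /= mulr0.
rewrite !mxE /= mulr1 /cofactor mulf_neq0 ?signr_eq0 //.
rewrite -det_tr det_trig; last first.
  apply/is_trig_mxP => a b ab; rewrite !mxE.
  have ne : (lift ord0 b == lift ord_max a) = false.
    apply/negbTE/eqP => /(congr1 (@nat_of_ord _)); rewrite lift0 lift_max => e.
    by move: ab; rewrite -e ltnNge leqW.
  rewrite ne mulr0n sub0r Htri' ?oppr0 //.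
  by rewrite lift0 lift_max ltnS.
apply/prodf_neq0 => a _; rewrite !mxE.
have ne : (lift ord0 a == lift ord_max a) = false.
  by apply/negbTE/eqP => /(congr1 (@nat_of_ord _)); rewrite lift0 lift_max => e; exact: (n_Sn _ (esym e)).
rewrite ne mulr0n sub0r oppr_eq0 -[T]HTs mxE.
by apply: Hsup; rewrite lift0 lift_max.
Qed.

Lemma ss_scale (c : R) (v : 'cV[R]_k.+1) : ss (c *: v) = c ^+ 2 * ss v.
Proof.
rewrite /ss mulr_sumr; apply: eq_bigr => i _; by rewrite mxE exprMn.
Qed.

Lemma main_ineq (nb g : R) : 0 < nb -> 0 < g -> rLG_opt T nb g < lambda_min T.
Proof.
move=> nbp gp.
set p := char_poly T.
have p0 : p != 0 by rewrite monic_neq0 // char_poly_monic.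
have [th0 Hth0] := @sym_eigen_exists R k T HTs.
have hr := roots_on_rootsR p0.
have inR x : eigenvalue T x = (x \in rootsR p).
  by rewrite -hr eigenvalue_root_char in_itv.
have srt := sorted_roots (- cauchy_bound p) (cauchy_bound p) p.
rewrite -/(rootsR p) in srt.
case E: (rootsR p) srt => [|th s] srt.
  by rewrite inR E in Hth0.
have Hth : eigenvalue T th by rewrite inR E mem_head.
have Hmin : forall x, eigenvalue T x -> th <= x.
  move=> x; rewrite inR E in_cons => /orP [/eqP -> //|xs].
  move: srt => /= /(order_path_min lt_trans) /allP /(_ x xs).
  exact: ltW.
have lm : lambda_min T = th.
  rewrite /lambda_min; apply/le_anti/andP; split.
    by apply: ge_inf => //; exists th => y Hy; exact: Hmin.
  by apply: lb_le_inf; [exists th; exact: Hth | move=> y; exact: Hmin].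
have K0 := KT_ge0.
set B0 := - KT - nb - nb / g ^+ 2.
have g2 : 0 < g ^+ 2 by rewrite exprn_gt0.
have cpos : 0 < nb / g ^+ 2 by rewrite divr_gt0.
set L := B0 - 1.
have thK : - KT <= th := eig_lb _ Hth.
have LK : L < - KT by rewrite /L /B0; lra.
have solx (l : R) : chM l != 0 ->
    (T - l%:M) *m ((nb / chM l) *: yv l) = - (nb *: e1 R k.+1).
  move=> c0; rewrite -scalemxAr sol_y scalerN scalerA divfK //.
have chL : chM L != 0.
  rewrite -eig_chM; apply/negP => /eig_lb; lra.
have GL : (Gp nb g).[L] < 0.
  have := ss_small _ _ _ _ nbp gp (solx L chL).
  rewrite ss_scale Gp_eval => /(_ ltac:(rewrite /L /B0; lra)).
  set c := chM L in chL *; set S := ss (yv L).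
  have c2 : 0 < c ^+ 2 by rewrite lt_def sqrf_eq0 chL sqr_ge0.
  have e : nb ^+ 2 * S = ((nb / c) ^+ 2 * S) * c ^+ 2.
    by field; rewrite chL.
  rewrite e => h; nra.
have Gth : 0 < (Gp nb g).[th].
  rewrite Gp_eval.
  have -> : chM th = 0 by apply/eqP; rewrite -eig_chM.
  rewrite expr0n /= mulr0 subr0 mulr_gt0 ?exprn_gt0 //.
  apply: (lt_le_trans _ (ss_le _ ord_max)).
  by rewrite lt_def sqrf_eq0 ymax sqr_ge0.
have [l0 /andP [Ll0 l0th] Hl0] : exists2 x, L <= x <= th & root (Gp nb g) x.
  apply: poly_ivt; first by lra.
  by rewrite (ltW GL) (ltW Gth).
have l0lt : l0 < th.
  rewrite lt_def l0th andbT; apply: contraTneq Hl0 => <-.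
  by rewrite /root gt_eqF.
have ch0 : chM l0 != 0.
  by apply/negP; rewrite -eig_chM => /Hmin; rewrite leNgt l0lt.
have feas : rLG_feasible T nb g l0 ((nb / chM l0) *: yv l0).
  split; first exact: solx.
  rewrite /vnorm -/(ss _) ss_scale.
  move: Hl0; rewrite /root Gp_eval subr_eq0 => /eqP h.
  have -> : (nb / chM l0) ^+ 2 * ss (yv l0) = g ^+ 2.
    rewrite expr_div_n mulrAC h mulfK ?sqrf_eq0 //.
  by rewrite sqrtr_sqr gtr0_norm.
have lbS : has_lbound [set l : R | exists x, rLG_feasible T nb g l x].
  exists B0 => l [x [Hx nx]].
  rewrite leNgt; apply/negP => lB.
  have := ss_small _ _ _ _ nbp gp Hx lB.
  have : ss x = g ^+ 2.
    by rewrite -nx /vnorm sqr_sqrtr //; exact: ss_ge0.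
  by move=> ->; rewrite ltxx.
rewrite lm /rLG_opt; apply: (le_lt_trans _ l0lt).
by apply: ge_inf => //; exists ((nb / chM l0) *: yv l0).
Qed.
End Tri.


Theorem theorem3p1 (R : realType) (n : nat) (M : 'M[R]_n) (b0 : 'cV[R]_n)
    (gamma : R) (k : nat) :
  M^T = M -> b0 != 0 -> 0 < gamma -> (0 < k)%N ->
  (forall j : nat, (2 <= j <= k)%N -> lanczos_beta M b0 j != 0) ->
  rLG_opt (lanczos_T M b0 k) (vnorm b0) gamma < lambda_min (lanczos_T M b0 k)
  /\ ~ rLG_hard_case (lanczos_T M b0 k) (vnorm b0) gamma.
Proof.
move=> _ b0n gp kp Hb.
case: k kp Hb => [//|k] _ Hb.
have HTs : (lanczos_T M b0 k.+1)^T = lanczos_T M b0 k.+1.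
  apply/matrixP => i j; rewrite !mxE.
  have [e|ne] := eqVneq (nat_of_ord j) i.
    by rewrite e.
  have [e1|n1] := eqVneq (nat_of_ord i) j.+1;
  have [e2|n2] := eqVneq (nat_of_ord j) i.+1 => //.
  by move: e1 e2 => /= ->; lia.
have Htri : forall i j : 'I_k.+1, (i.+1 < j)%N -> lanczos_T M b0 k.+1 i j = 0.
  move=> i j h; rewrite mxE.
  have -> : (nat_of_ord i == j) = false by apply/negbTE/eqP; lia.
  have -> : (nat_of_ord j == i.+1) = false by apply/negbTE/eqP; lia.
  have -> : (nat_of_ord i == j.+1) = false by apply/negbTE/eqP; lia.
  by [].
have Hsup : forall i j : 'I_k.+1, j = i.+1 :> nat -> lanczos_T M b0 k.+1 i j != 0.
  move=> i j h; rewrite mxE.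
  have -> : (nat_of_ord i == j) = false by apply/negbTE/eqP; lia.
  rewrite h eqxx; apply: Hb.
  have := ltn_ord j; rewrite h; lia.
have nbp : 0 < vnorm b0.
  rewrite /vnorm sqrtr_gt0 lt_def sumr_ge0 ?andbT; last by move=> i _; rewrite sqr_ge0.
  apply: contra b0n => /eqP H; apply/eqP/matrixP => i j; rewrite ord1 [RHS]mxE.
  have Hp : forall t : 'I_n, predT t -> 0 <= b0 t 0 ^+ 2 by move=> t _; rewrite sqr_ge0.
  have := @psumr_eq0P _ _ predT (fun i => b0 i 0 ^+ 2) Hp H i isT.
  by move/eqP; rewrite sqrf_eq0 => /eqP.
split.
  exact: main_ineq.
exact: not_hard.
Qed.
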